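(* Let $K$ be a virtual knot and $r\geq 2$ an integer, and let $L(K;r)=K_1\cup\dots\cup K_r$ be the $r$-multiplexed virtual link of $K$. Then for all integers $i,j$ with $1\leq i\neq j\leq r$, \[\mathrm{Lk}(K_i,K_j)=\sum_{n\equiv i-j \pmod r} J_n(K).\]
   Context: Virtual link diagrams have real (positive/negative) and virtual crossings; virtual links are equivalence classes under generalized Reidemeister moves (R1–R3, VR1–VR4). $r$-multiplexing: for a virtual knot diagram $D$ and $r\geq2$, $L(D;r)$ is obtained by replacing $D$ with a bundle of $r$ parallel strands, positions numbered $1,\dots,r$ left to right w.r.t. the orientation. At each positive (resp. negative) crossing of $D$ the two bundles cross in an $r\times r$ grid where the position-$p$ strand of the over-bundle crosses the position-$p$ strand of the under-bundle at a positive (resp. negative) real crossing with the over-bundle strand on top, all other grid crossings being virtual. At each virtual crossing of $D$ the bundles cross in an $r\times r$ grid of virtual crossings, and each bundle additionally has its strands cyclically shifted via $r-1$ virtual crossings: position $p$ goes to $p-1\pmod r$ if the other string of $D$ crosses the bundle from left to right, and to $p+1 \pmod r$ if from right to left. The result has $r$ components; with a base point on $D$, the $i$th component is the one through position $i$ there. The equivalence class $L(K;r)$ of $L(D;r)$ for a diagram $D$ of $K$ is independent of $D$. Index: for a real crossing $c$ of a diagram, its specified path $\rho$ runs along the diagram from the overcrossing to the undercrossing at $c$; walking along $\rho$, each real crossing on $\rho$ contributes $+1$ if the other string crosses $\rho$ from left to right and $-1$ otherwise; $\mathrm{ind}(c)$ is the sum. For a virtual knot diagram $D$ and integer $n$,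 $J_n(D)$ is the sum of signs of real crossings of index $n$; for $n\neq0$ it is an invariant $J_n(K)$ of the virtual knot $K$ (the $n$-writhe). $(i,j)$-linking number: for a diagram $D_1\cup\dots\cup D_r$ of a virtual link and $i\neq j$, $\mathrm{Lk}(K_i,K_j)$ is the sum of signs of real crossings where $D_i$ passes over $D_j$; it is a virtual link invariant. *)

(* Defs.v *)
From mathcomp Require Import all_boot all_order all_algebra.
Set Implicit Arguments. Unset Strict Implicit. Unset Printing Implicit Defensive.
Import GRing.Theory Num.Theory.

(* Walking along the oriented diagram from a base point, one meets the      *)
(* crossings (real and virtual) in "passages" 0, 1, ..., m-1 (cyclically);  *)
(* every crossing is met exactly twice, [mate k] is the other passage       *)
(* through the same crossing.  For each passage k:                          *)
(*   is_real k : the crossing is real (otherwise virtual);                  *)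
(*   is_over k : (real crossings) we pass on the over-strand at k;          *)
(*   lr k      : the other string crosses our string from left to right    *)
(*               (w.r.t. the orientation) at passage k.                     *)
(* Planarity: the underlying 4-valent graph, with the rotation system       *)
(* forced by the transversal crossings and the lr data, is a plane map,     *)
(* i.e. (being connected) it has V - E + F = 2, with V = m/2, E = m.       *)

(* darts: (k, false) = incoming half-edge at passage k,
          (k, true)  = outgoing half-edge at passage k *)
Definition dart (m : nat) := ('I_m * bool)%type.

(* edge involution: out(k) <-> in(k+1) *)
Definition dart_edge (m : nat) (d : dart m) : dart m :=
  if d.2 then (ordS d.1, false) else (ord_pred d.1, true).

(* counterclockwise successor around the crossing *)
Definition dart_rot (m : nat) (mate : 'I_m -> 'I_m) (lr : 'I_m -> bool)
  (d : dart m) : dart m := (mate d.1, addb d.2 (lr d.1)).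

(* face permutation; its orbits are the faces (regions) of the diagram *)
Definition face_perm (m : nat) (mate : 'I_m -> 'I_m) (lr : 'I_m -> bool)
  (d : dart m) : dart m := dart_rot mate lr (dart_edge d).

Definition nfaces (m : nat) (mate : 'I_m -> 'I_m) (lr : 'I_m -> bool) : nat :=
  fcard (face_perm mate lr) (@predT (dart m)).

Record vkdiagram := VKDiagram {
  npass : nat;
  mate : 'I_npass -> 'I_npass;
  is_real : 'I_npass -> bool;
  is_over : 'I_npass -> bool;
  lr : 'I_npass -> bool;
  mate_inv : forall k, mate (mate k) = k;
  mate_neq : forall k, mate k != k;
  mate_real : forall k, is_real (mate k) = is_real k;
  mate_over : forall k, is_real k -> is_over (mate k) = ~~ is_over k;
  mate_lr : forall k, lr (mate k) = ~~ lr k;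
  vk_planar : npass = 0%N \/ nfaces mate lr = (npass./2 + 2)%N
}.

Section Invariants.
Variable D : vkdiagram.
Local Notation m := (npass D).
Local Open Scope ring_scope.

(* a real crossing is represented by its over-passage *)
Definition real_over (o : 'I_m) : bool := @is_real D o && @is_over D o.

(* sign of the real crossing with over-passage o: positive iff the
   under-string crosses the over-string from right to left *)
Definition csign (o : 'I_m) : int := if @lr D o then -1 else 1.

Definition pdist (a b : 'I_m) : nat := ((b + m - a) %% m)%N.

Definition on_path (o u k : 'I_m) : bool := (0 < pdist o k < pdist o u)%N.

Definition ind (o : 'I_m) : int :=
  \sum_(k : 'I_m | @is_real D k && on_path o (@mate D o) k)
     (if @lr D k then 1 else -1).

Definition J (n : int) : int :=
  \sum_(o : 'I_m | real_over o && (ind o == n)) csign o.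

(* total cyclic shift of bundle positions accumulated from the base point
   up to (not including) passage k *)
Definition mshift (k : 'I_m) : int :=
  \sum_(j : 'I_m | (j < k)%N && ~~ @is_real D j) (if @lr D j then -1 else 1).

(* label (in 1..r) of the component of L(D;r) occupying bundle position
   p (in 1..r) at passage k: the one that was at position label at the
   base point *)
Definition mcomp (r p : nat) (k : 'I_m) : nat :=
  (absz (modz (p%:Z - 1 - mshift k) r%:Z)).+1.

(* real crossings of L(D;r): (sign, over-component, under-component) *)
Definition multiplex_crossings (r : nat) : seq (int * nat * nat) :=
  [seq (csign o, mcomp r p o, mcomp r p (@mate D o))
     | o <- [seq o <- enum 'I_m | real_over o], p <- iota 1 r].

End Invariants.

Definition Lk (cr : seq (int * nat * nat)) (i j : nat) : int :=
  (\sum_(c <- cr | (c.1.2 == i) && (c.2 == j)) c.1.1)%R.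

(* Main.v *)
Require Import Defs.
From HB Require Import structures.
From mathcomp Require Import all_boot all_order all_algebra ring lra zify.
Set Implicit Arguments. Unset Strict Implicit. Unset Printing Implicit Defensive.
Import Order.TTheory GRing.Theory Num.Theory.
Local Open Scope ring_scope.

Definition mkLin (U V : lmodType rat) (f : U -> V) (H : linear f) : {linear U -> V} :=
  HB.pack f (GRing.isLinear.Build rat U V *:%R f H).

Lemma mkLinE (U V : vectType rat) (f : U -> V) (H : linear f) x :
  linfun (mkLin H) x = f x.
Proof. by rewrite lfunE. Qed.

Definition phi (D : vkdiagram) := face_perm (@mate D) (@lr D).
Definition rotd (D : vkdiagram) := dart_rot (@mate D) (@lr D).
Definition alp (D : vkdiagram) := @dart_edge (npass D).
Arguments phi D : clear implicits.
Arguments rotd D : clear implicits.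
Arguments alp D : clear implicits.

Lemma sig2 D d : rotd D (rotd D d) = (d.1, ~~ d.2).
Proof.
case: d => k b; rewrite /rotd /dart_rot /= mate_inv mate_lr.
by case: b; case: (lr k).
Qed.

Lemma alp2 D d : alp D (alp D d) = d.
Proof.
case: d => k [] /=; rewrite /alp /dart_edge /=; first by rewrite ordSK.
by rewrite ord_predK.
Qed.

Lemma phiE D d : phi D d = rotd D (alp D d).
Proof. by []. Qed.

Lemma sig_inj D : injective (rotd D).
Proof.
move=> x y E; have := congr1 (fun z => rotd D (rotd D (rotd D z))) E.
by rewrite /= !sig2 /=; case: x {E} => ? [] ; case: y => ? [].
Qed.

Lemma phi_inj D : injective (phi D).
Proof.
move=> x y; rewrite !phiE => /sig_inj E.
by rewrite -(alp2 x) E alp2.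
Qed.

Definition VD D := {ffun dart (npass D) -> rat^o}.
Definition VE D := {ffun 'I_(npass D) -> rat^o}.

Definition finvf D (x : VD D) : VD D := [ffun d => x (phi D d) - x d].
Lemma finvf_lin D : linear (@finvf D).
Proof. move=> a u v; apply/ffunP=> d; by rewrite !ffunE scalerBr opprD addrACA. Qed.
Lemma finvf_lin' D : linear (@finvf D).
Proof. move=> a u v; apply/ffunP=> d; rewrite !ffunE /GRing.scale /=. ring. Qed.

Ltac linsolve := move=> ? ? ?; apply/ffunP=> ?; rewrite !ffunE /GRing.scale /=; ring.

Definition Dm D (x : VD D) : VE D := [ffun k => x (alp D (k,true)) - x (k,true)].
Lemma Dm_lin D : linear (@Dm D). Proof. linsolve. Qed.
Definition Wf D (c : VE D) : VE D :=
  [ffun k => (c k - c (ord_pred k)) + (c (mate k) - c (ord_pred (mate k)))].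
Lemma Wf_lin D : linear (@Wf D). Proof. linsolve. Qed.

Definition U D : {vspace VD D} := lker (linfun (mkLin (@finvf_lin D))).
Definition W D : {vspace VE D} := lker (linfun (mkLin (@Wf_lin D))).
Definition DL D := linfun (mkLin (@Dm_lin D)).

Lemma ffun0E (T : finType) (x : T) : (0 : {ffun T -> rat^o}) x = 0.
Proof. by rewrite ffunE. Qed.

Lemma memU D x : (x \in U D) = [forall d, x (phi D d) == x d].
Proof.
rewrite memv_ker mkLinE; apply/eqP/forallP => [H d|H].
  by have := congr1 (fun f : VD D => f d) H; rewrite /= !ffunE => /eqP; rewrite subr_eq0.
by apply/ffunP=> d; rewrite !ffunE (eqP (H d)) subrr.
Qed.

Lemma memW D c : (c \in W D) = [forall k,
  (c k - c (ord_pred k)) + (c (mate k) - c (ord_pred (mate k))) == 0].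
Proof.
rewrite memv_ker mkLinE; apply/eqP/forallP => [H k|H].
  by have := congr1 (fun f : VE D => f k) H; rewrite /= !ffunE => ->.
by apply/ffunP=> k; rewrite !ffunE (eqP (H k)).
Qed.

Lemma U_rot D x d : x \in U D -> x (rotd D d) = x (alp D d).
Proof.
rewrite memU => /forallP H; have := eqP (H (alp D d)).
by rewrite phiE alp2.
Qed.

Lemma DLE D x k : DL D x k = x (alp D (k,true)) - x (k,true).
Proof. by rewrite mkLinE ffunE. Qed.

Lemma rot_in D k : rotd D (k, false) = (mate k, lr k).
Proof. by []. Qed.
Lemma rot_gen D k b : rotd D (k, b) = (mate k, addb b (lr k)).
Proof. by []. Qed.
Lemma alpT D k : alp D (k, true) = (ordS k, false). Proof. by []. Qed.
Lemma alpF D k : alp D (k, false) = (ord_pred k, true). Proof. by []. Qed.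

Lemma DU_W D : (DL D @: U D <= W D)%VS.
Proof.
apply/subvP => c /memv_imgP [x xU ->]; rewrite memW; apply/forallP => k.
rewrite !DLE !alpT !ord_predK.
set j := mate k.
have R1 := U_rot (k, false) xU.
have R2 := U_rot (j, lr k) xU.
have R3 := U_rot (k, true) xU.
have R4 := U_rot (j, ~~ lr k) xU.
rewrite rot_in -/j alpF in R1.
rewrite rot_gen /j mate_inv mate_lr -/j in R2.
rewrite rot_gen -/j alpT /= in R3.
rewrite rot_gen /j mate_inv mate_lr -/j in R4.
move: R1 R2 R3 R4; case: (lr k) => /= ; rewrite ?alpT ?alpF /= => R1 R2 R3 R4;
apply/eqP; lra.
Qed.

Lemma ordS_val m (k : 'I_m) : (k.+1 < m)%N -> val (ordS k) = k.+1.
Proof. by move=> h; rewrite /= modn_small. Qed.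

Lemma ordS_const (T : Type) m (f : 'I_m -> T) :
  (forall k, f (ordS k) = f k) -> forall k k', f k = f k'.
Proof.
move=> H.
suff S : forall (k : 'I_m) (z : 'I_m), val z = 0%N -> f k = f z.
  move=> k k'; have m0 := leq_ltn_trans (leq0n k) (ltn_ord k).
  by rewrite (S k (Ordinal m0)) // (S k' (Ordinal m0)).
move=> [n Hn] z z0.
elim: n Hn => [|n IH] Hn; first by congr f; apply: val_inj.
have Hn' : (n < m)%N by apply: ltnW.
rewrite -(IH Hn') -(H (Ordinal Hn')); congr f; apply: val_inj; rewrite ordS_val //=.
Qed.

Definition ones D : VD D := [ffun => 1].

Lemma ker_small D : (U D :&: lker (DL D) <= <[ones D]>)%VS.
Proof.
apply/subvP => x /memv_capP [xU]; rewrite memv_ker => /eqP Dx0.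
have Dk k : x (ordS k, false) = x (k, true).
  by have := congr1 (fun f : VE D => f k) Dx0; rewrite DLE ffun0E alpT => /eqP; rewrite subr_eq0 => /eqP.
have xalp d : x (alp D d) = x d.
  case: d => k [] ; first by rewrite alpT Dk.
  by rewrite alpF -Dk ord_predK.
have xrot d : x (rotd D d) = x d by rewrite U_rot // xalp.
have TF k : x (k, true) = x (k, false).
  by rewrite -[(k, true)]/((k, false).1, ~~ (k,false).2) -sig2 !xrot.
have C := @ordS_const _ _ (fun k => x (k, false)) (fun k => etrans (Dk k) (TF k)).
have [m0|mpos] := posnP (npass D).
  have -> : x = 0 by apply/ffunP => -[k b]; have := ltn_ord k; rewrite {2}m0.
  exact: mem0v.
pose z := Ordinal mpos.
have -> : x = x (z, false) *: ones D.
  apply/ffunP => -[k b]; rewrite !ffunE /GRing.scale /= mulr1.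
  by case: b; rewrite ?TF (C k z).
by apply: memvZ; apply: memv_line.
Qed.

Lemma symphi D : connect_sym (frel (phi D)).
Proof. exact: fconnect_sym (@phi_inj D). Qed.

Definition Rt D := {d : dart (npass D) | froots (phi D) d}.
Definition rootsub D (d : dart (npass D)) : Rt D :=
  exist _ (froot (phi D) d) (roots_root (@symphi D) d).
Definition Gm D (y : {ffun Rt D -> rat^o}) : VD D := [ffun d => y (rootsub d)].
Lemma Gm_lin D : linear (@Gm D). Proof. linsolve. Qed.
Definition GL D := linfun (mkLin (@Gm_lin D)).

Lemma G_U D : (GL D @: fullv <= U D)%VS.
Proof.
apply/subvP => x /memv_imgP [y _ ->]; rewrite memU; apply/forallP => d.
rewrite !mkLinE !ffunE; apply/eqP; apply: f_equal; apply: val_inj => /=.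
apply/esym/(fingraph.rootP (@symphi D)); exact: fconnect1.
Qed.

Lemma G_dim D : \dim (GL D @: fullv) = nfaces (@mate D) (@lr D).
Proof.
rewrite limg_dim_eq; last first.
  apply/eqP; rewrite capfv; apply/lker0P => y1 y2 E; apply/ffunP => r.
  have := congr1 (fun f : VD D => f (val r)) E; rewrite !mkLinE !ffunE.
  suff -> : rootsub (val r) = r by [].
  by apply: val_inj => /=; apply/eqP; exact: (valP r).
rewrite dimvf /dim /= muln1 card_sig /nfaces; apply: eq_card => d.
by rewrite !inE andbT.
Qed.

Definition St D := {k : 'I_(npass D) | (k < mate k)%N}.
Definition Hm D (k0 : 'I_(npass D)) (c : VE D) : {ffun option (St D) -> rat^o} :=
  [ffun o => if o is Some a then c (val a) - c (ord_pred (val a)) else c k0].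
Lemma Hm_lin D k0 : linear (@Hm D k0).
Proof. move=> ? ? ?; apply/ffunP=> -[a|]; rewrite !ffunE /GRing.scale /=; ring. Qed.
Definition HL D k0 := linfun (mkLin (@Hm_lin D k0)).

Lemma W_dim D (k0 : 'I_(npass D)) : (\dim (W D) <= #|{: St D}|.+1)%N.
Proof.
rewrite -(@limg_dim_eq _ _ _ (HL k0)); last first.
  apply/eqP; rewrite -subv0; apply/subvP => c /memv_capP [cW].
  rewrite memv_ker => /eqP H0; rewrite memv0; apply/eqP/ffunP => k.
  have Hk (a : St D) : c (val a) - c (ord_pred (val a)) = 0.
    by have := congr1 (fun f : {ffun option (St D) -> rat^o} => f (Some a)) H0;
      rewrite mkLinE !ffunE.
  move: cW; rewrite memW => /forallP cW.
  have t k1 : c k1 - c (ord_pred k1) = 0.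
    case: (ltngtP k1 (mate k1)) => h.
    - exact: (Hk (exist _ k1 h)).
    - have h' : (mate k1 < mate (mate k1))%N by rewrite mate_inv.
      have := eqP (cW k1); rewrite (Hk (exist _ (mate k1) h')) addr0.
      by [].
    - by have := mate_neq k1; rewrite -(val_inj h) eqxx.
  have S1 k1 : c (ordS k1) = c k1.
    by have := t (ordS k1); rewrite ordSK => /eqP; rewrite subr_eq0 => /eqP.
  rewrite (ordS_const S1 k k0) ffun0E.
  by have := congr1 (fun f : {ffun option (St D) -> rat^o} => f None) H0;
    rewrite mkLinE !ffunE.
apply: leq_trans (dimvS (subvf _)) _.
by rewrite dimvf /dim /= muln1 card_option.
Qed.

Lemma mate_inj D : injective (@mate D).
Proof. exact: (can_inj (@mate_inv D)). Qed.

Lemma card_St D : (#|{: St D}| * 2)%N = npass D.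
Proof.
rewrite card_sig.
set A := [pred k : 'I_(npass D) | (k < mate k)%N].
have E : #|[predC A]| = #|A|.
  rewrite -(card_image (@mate_inj D)); apply: eq_card => k; rewrite !inE.
  apply/imageP/idP => [[k' hk' ->]|h].
    rewrite !inE /= -leqNgt in hk'; rewrite mate_inv.
    rewrite ltn_neqAle hk' andbT; apply/eqP => h'.
    by have := mate_neq k'; rewrite (val_inj h') eqxx.
  exists (mate k); last by rewrite mate_inv.
  by rewrite !inE /= mate_inv -leqNgt ltnW.
by rewrite muln2 -addnn -{2}E cardC card_ord.
Qed.

Lemma W_img D (c : VE D) : (0 < npass D)%N -> c \in W D ->
  exists2 x, x \in U D & DL D x = c.
Proof.
move=> mpos cW; pose k0 := Ordinal mpos.
suff E : (DL D @: U D)%VS = W D.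
  by move: cW; rewrite -E => /memv_imgP [x xU ->]; exists x.
apply/eqP; rewrite eqEdim DU_W /=.
have h1 := limg_ker_dim (DL D) (U D).
have h2 : (\dim (U D :&: lker (DL D)) <= 1)%N.
  by apply: leq_trans (dimvS (ker_small D)) _; rewrite dim_vline leq_b1.
have h3 := dimvS (G_U D); rewrite G_dim in h3.
have h4 := W_dim k0.
have h5 := card_St D.
have h6 : nfaces (@mate D) (@lr D) = ((npass D)./2 + 2)%N.
  case: (vk_planar D) => // h; have := mpos; by rewrite {1}h.
rewrite h6 in h3.
have h7 : ((npass D)./2 = #|{: St D}|)%N by rewrite -{1}h5 muln2 doubleK.
rewrite h7 in h3; move: h1 h2 h3 h4; move: (\dim (W D)) (\dim (U D :&: lker (DL D))) (\dim (DL D @: U D)) (\dim (U D)) => a b e f /=; lia.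
Qed.

Lemma ell_zero D x : x \in U D ->
  \sum_(j : 'I_(npass D)) (if lr j then - DL D x (ord_pred j) else DL D x j) = 0.
Proof.
move=> xU.
have term j : (if lr j then - DL D x (ord_pred j) else DL D x j)
    = x (mate j, true) - x (j, ~~ lr j).
  have R := U_rot (j, ~~ lr j) xU; rewrite rot_gen /= in R.
  rewrite !DLE alpT ord_predK.
  by move: R; case: (lr j) => /= R; rewrite R ?alpF ?alpT /=; ring.
rewrite (eq_bigr _ (fun j _ => term j)) sumrB.
have S1 : \sum_(j : 'I_(npass D)) x (mate j, true) = \sum_j x (j, true).
  by rewrite (reindex_inj (@mate_inj D)) /=; apply: eq_bigr => j _; rewrite mate_inv.
have S2 : \sum_(j : 'I_(npass D)) x (j, ~~ lr j) = \sum_j x (j, true).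
  rewrite (reindex_inj (@mate_inj D)) /=.
  rewrite (eq_bigr (fun k => x (ord_pred k, true))); last first.
    by move=> k _; rewrite mate_lr negbK -alpF -(U_rot _ xU) rot_gen.
  by rewrite [RHS](reindex_inj (@ord_pred_inj _)).
by rewrite S1 S2 subrr.
Qed.

Lemma pdistE D (a b : 'I_(npass D)) :
  pdist a b = if (a <= b)%N then (b - a)%N else (b + npass D - a)%N.
Proof.
rewrite /pdist; have ha := ltn_ord a; have hb := ltn_ord b.
case: leqP => h.
  by rewrite -addnBAC // modnDr modn_small //; lia.
by rewrite modn_small //; lia.
Qed.

Lemma val_pred m (k : 'I_m) :
  nat_of_ord (ord_pred k) = if nat_of_ord k == 0%N then m.-1 else (nat_of_ord k).-1.
Proof.
case: k => [[|k] Hk] /=.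
  by rewrite add0n modn_small // prednK.
by rewrite modnDr modn_small //; lia.
Qed.

Definition Lv D (o : 'I_(npass D)) : VE D :=
  [ffun k => if (pdist o k < pdist o (mate o))%N then 1 else 0].

Lemma pdist_lt D (a b : 'I_(npass D)) : (pdist a b < npass D)%N.
Proof. by rewrite /pdist ltn_pmod // (leq_ltn_trans (leq0n _) (ltn_ord a)). Qed.

Lemma pdist0 D (a b : 'I_(npass D)) : (pdist a b == 0%N) = (a == b).
Proof.
rewrite pdistE; have ha := ltn_ord a; have hb := ltn_ord b.
apply/idP/idP => [|/eqP ->]; last by rewrite leqnn subnn.
by move=> h; apply/eqP/val_inj => /=; move: h; case: leqP => ? /eqP ?; lia.
Qed.

Lemma pdist_inj D (a : 'I_(npass D)) : injective (pdist a).
Proof.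
move=> b c; rewrite !pdistE => h; apply/val_inj => /=.
have ha := ltn_ord a; have hb := ltn_ord b; have hc := ltn_ord c.
by move: h; do 2 case: leqP => ?; lia.
Qed.

Lemma pdist_pred D (a k : 'I_(npass D)) :
  pdist a (ord_pred k) = if k == a then (npass D).-1 else (pdist a k).-1.
Proof.
rewrite !pdistE val_pred.
have ha := ltn_ord a; have hk := ltn_ord k.
case: (eqVneq k a) => [->|ka].
  case: (eqVneq (nat_of_ord a) 0%N) => h /=; case: leqP => ?; lia.
have ka' : nat_of_ord k != nat_of_ord a by [].
case: (eqVneq (nat_of_ord k) 0%N) => h /=; do 2 case: leqP => ?; lia.
Qed.

Lemma tL D (o k : 'I_(npass D)) :
  Lv o k - Lv o (ord_pred k) = (k == o)%:R - (k == mate o)%:R.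
Proof.
rewrite !ffunE pdist_pred.
have hU := pdist_lt o (mate o); have hk := pdist_lt o k.
have U0 : pdist o (mate o) != 0%N by rewrite pdist0 eq_sym mate_neq.
case: (eqVneq k o) => [->|ko].
  rewrite [o == mate o]eq_sym (negbTE (mate_neq o)).
  have -> : pdist o o = 0%N by apply/eqP; rewrite pdist0.
  by do 2 case: ifP => ?; rewrite ?subr0 ?sub0r ?subrr //; lia.
have k0 : pdist o k != 0%N by rewrite pdist0 eq_sym.
case: (eqVneq k (mate o)) => [->|ku].
  by do 2 case: ifP => ?; rewrite ?subr0 ?sub0r ?subrr //; lia.
have ku' : pdist o k != pdist o (mate o) by apply: contra ku => /eqP /pdist_inj ->.
by do 2 case: ifP => ?; rewrite ?subr0 ?sub0r ?subrr //; lia.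
Qed.

Lemma Lv_W D (o : 'I_(npass D)) : Lv o \in W D.
Proof.
rewrite memW; apply/forallP => k; rewrite !tL.
have e1 : (mate k == mate o) = (k == o) := inj_eq (@mate_inj D) k o.
have e2 : (mate k == o) = (k == mate o).
  by rewrite -{1}(mate_inv o); exact: inj_eq (@mate_inj D) k (mate o).
rewrite e1 e2.
by case: (k == o); case: (k == mate o).
Qed.

Lemma key_rat D (o : 'I_(npass D)) :
  \sum_(j : 'I_(npass D) | on_path o (mate o) j) (if lr j then -1 else 1 : rat) = 0.
Proof.
have mpos : (0 < npass D)%N by apply: leq_ltn_trans (ltn_ord o).
have [x xU Dx] := W_img mpos (Lv_W o).
have := ell_zero xU; rewrite Dx.
have hU := pdist_lt o (mate o).
have U0 : pdist o (mate o) != 0%N by rewrite pdist0 eq_sym mate_neq.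
have pt j : (if lr j then - Lv o (ord_pred j) else Lv o j) =
   (if on_path o (mate o) j then (if lr j then -1 else 1) else 0)
   + (j == o)%:R * (if lr j then 0 else 1)
   + (j == mate o)%:R * (if lr j then -1 else 0).
  rewrite !ffunE pdist_pred /on_path.
  have hk := pdist_lt o j.
  case: (eqVneq j o) => [->|ko].
    rewrite [o == mate o]eq_sym (negbTE (mate_neq o)).
    have -> : pdist o o = 0%N by apply/eqP; rewrite pdist0.
    by case: (lr o); do 2? case: ifP => ?; rewrite /= ?mul0r ?mul1r ?addr0 ?add0r //; lia.
  have k0 : pdist o j != 0%N by rewrite pdist0 eq_sym.
  case: (eqVneq j (mate o)) => [->|ku].
    by case: (lr _); do 3? case: ifP => ?; rewrite /= ?mul0r ?mul1r ?addr0 ?add0r //; lia.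
  have ku' : pdist o j != pdist o (mate o) by apply: contra ku => /eqP /pdist_inj ->.
  by case: (lr _); do 3? case: ifP => ?; rewrite /= ?mul0r ?mul1r ?addr0 ?add0r //; lia.
move=> H.
have A (a : 'I_(npass D)) (g : 'I_(npass D) -> rat) :
    \sum_(j : 'I_(npass D)) (j == a)%:R * g j = g a.
  rewrite (bigD1 a) //= big1 => [|j /negbTE ->]; last by rewrite mul0r.
  by rewrite eqxx mul1r addr0.
rewrite (eq_bigr _ (fun j _ => pt j)) !big_split /= !A mate_lr -big_mkcond /= in H.
by move: H; case: (lr o) => /=; rewrite ?addr0 ?addrK.
Qed.

Lemma key_int D (o : 'I_(npass D)) :
  \sum_(j : 'I_(npass D) | on_path o (mate o) j) (if lr j then 1 else -1 : int) = 0.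
Proof.
apply: (@intr_inj rat); rewrite raddf_sum /= mulr0z.
transitivity (- \sum_(j : 'I_(npass D) | on_path o (mate o) j) (if lr j then -1 else 1 : rat));
  last by rewrite key_rat oppr0.
rewrite -sumrN; apply: eq_bigr => j _.
by case: (lr j) => /=; rewrite ?opprK.
Qed.

Lemma on_pathE D (o u j : 'I_(npass D)) : on_path o u j =
  if (o < u)%N then (o < j < u)%N else if (u < o)%N then ((o < j) || (j < u))%N else false.
Proof.
rewrite /on_path !pdistE.
have ho := ltn_ord o; have hu := ltn_ord u; have hj := ltn_ord j.
by case: (leqP o j) => h1; case: (ltngtP o u) => h2 /=; lia.
Qed.

Definition sgi D (j : 'I_(npass D)) : int := if lr j then -1 else 1.
Definition T D (c : 'I_(npass D) -> int) : int :=
  \sum_j (if is_real j then 0 else sgi j * c j).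

Lemma mshiftT D (k : 'I_(npass D)) : mshift k = @T D (fun j => if (j < k)%N then 1 else 0).
Proof.
rewrite /mshift big_mkcond /T; apply: eq_bigr => j _.
by case: (j < k)%N; case: (is_real j) => /=; rewrite ?mulr1 ?mulr0.
Qed.

Lemma indT D (o : 'I_(npass D)) :
  ind o = @T D (fun j => if on_path o (mate o) j then 1 else 0).
Proof.
have K := key_int o; rewrite (bigID (fun j => is_real j)) /= in K.
have E1 : ind o = \sum_(j | on_path o (mate o) j && is_real j) (if lr j then 1 else -1 : int).
  by rewrite /ind; apply: eq_bigl => j; rewrite andbC.
have E2 : \sum_(j | on_path o (mate o) j && ~~ is_real j) (if lr j then 1 else -1 : int)
    = - @T D (fun j => if on_path o (mate o) j then 1 else 0).
  rewrite /T -sumrN big_mkcond; apply: eq_bigr => j _.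
  by case: (on_path _ _ _); case: (is_real j); rewrite /sgi; case: (lr j) => /=;
    rewrite ?mulr1 ?mulr0 ?oppr0 ?opprK.
rewrite E1; move/eqP: K; rewrite E2 addr_eq0 opprK => /eqP ->. done.
Qed.

Lemma T1 D : @T D (fun _ => 1) = 0.
Proof.
have E : @T D (fun _ => 1) = - @T D (fun _ => 1).
  rewrite {1}/T (reindex_inj (@mate_inj D)) /T -sumrN; apply: eq_bigr => j _.
  by rewrite mate_real /sgi mate_lr; case: (is_real j); case: (lr j); rewrite /= ?oppr0.
move: E; move: (@T D _) => t; lia.
Qed.

Lemma mshift_ind D (o : 'I_(npass D)) : is_real o -> mshift (mate o) - mshift o = ind o.
Proof.
move=> ro; rewrite !mshiftT indT.
have ru : is_real (mate o) by rewrite mate_real.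
have ho := ltn_ord o; have hu := ltn_ord (mate o).
have nu : nat_of_ord (mate o) != nat_of_ord o by apply: (mate_neq o).
case: (ltngtP o (mate o)) => h.
- rewrite /T -sumrB; apply: eq_bigr => j _.
  case: (boolP (is_real j)) => rj; first by rewrite subrr.
  have jo : nat_of_ord j != nat_of_ord o by apply: contraNneq rj => /val_inj ->.
  rewrite -mulrBr on_pathE h; congr (_ * _).
  by case: ifP => ?; case: ifP => ?; case: ifP => ?; rewrite ?subrr ?subr0 //; lia.
- rewrite -[RHS]subr0 -(T1 D) /T -!sumrB; apply: eq_bigr => j _.
  case: (boolP (is_real j)) => rj; first by rewrite !subrr.
  have jo : nat_of_ord j != nat_of_ord o by apply: contraNneq rj => /val_inj ->.
  have ju : nat_of_ord j != nat_of_ord (mate o) by apply: contraNneq rj => /val_inj ->.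
  have h' : (o < mate o)%N = false by rewrite ltnNge (ltnW h).
  rewrite -!mulrBr on_pathE h' h; congr (_ * _).
  by case: ifP => ?; case: ifP => ?; case: ifP => ?; rewrite ?subrr ?subr0 //; lia.
- by move: nu; rewrite h eqxx.
Qed.
Lemma modz_eqb (a b : int) (r : nat) : 0 <= b < r%:Z ->
  ((a %% r%:Z)%Z == b) = (r%:Z %| a - b)%Z.
Proof. by move=> hb; rewrite -eqz_mod_dvd (modz_small hb). Qed.

Lemma absz_eqS (X : int) (i : nat) : 0 <= X -> (1 <= i)%N ->
  ((absz X).+1 == i) = (X == i%:Z - 1).
Proof. case: X => [n|n] // _ hi /=; apply/eqP/eqP; lia. Qed.

Lemma count_dvd (r : nat) (t c : int) : (0 < r)%N ->
  \sum_(p <- iota 1 r) (if (r%:Z %| p%:Z - t)%Z then c else 0) = c.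
Proof.
move=> r0.
pose X := ((t - 1) %% r%:Z)%Z.
have X0 : 0 <= X by apply: modz_ge0; rewrite eqz_nat -lt0n.
have Xr : X < r%:Z by apply: ltz_pmod; rewrite ltz_nat.
pose p0 := (absz X).+1.
rewrite (eq_big_seq (fun p => if p == p0 then c else 0)); last first.
  move=> p; rewrite mem_iota => hp.
  have hp' : 0 <= p%:Z - 1 < r%:Z by apply/andP; split; lia.
  rewrite /p0 [p == _]eq_sym absz_eqS //; last by case/andP: hp.
  rewrite /X (@modz_eqb (t-1) (p%:Z - 1) r hp') -rpredN opprB.
  by have -> : t - 1 - (p%:Z - 1) = t - p%:Z by ring.
have -> : iota 1 r = index_iota 1 r.+1 by rewrite /index_iota subSS subn0.
rewrite -big_mkcond big_nat1_eq.
suff -> : (0 < p0 < r.+1)%N by [].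
rewrite /p0 ltnS /=; clearbody p0; clear p0; move: X0 Xr; case: X => [n|n] //= _; lia.
Qed.

Lemma mcompE D r p (k : 'I_(npass D)) q : (0 < r)%N -> (1 <= q <= r)%N ->
  (mcomp r p k == q) = (r%:Z %| (p%:Z - 1 - mshift k) - (q%:Z - 1))%Z.
Proof.
move=> r0 /andP [q1 qr]; rewrite /mcomp absz_eqS //; last first.
  by apply: modz_ge0; rewrite eqz_nat -lt0n.
by rewrite modz_eqb //; apply/andP; split; lia.
Qed.

Lemma inner D r i j (o : 'I_(npass D)) (c : int) :
  (0 < r)%N -> (1 <= i <= r)%N -> (1 <= j <= r)%N -> is_real o ->
  \sum_(p <- iota 1 r) (if (mcomp r p o == i) && (mcomp r p (mate o) == j) then c else 0)
  = if (ind o == (i%:Z - j%:Z) %[mod r%:Z])%Z then c else 0.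
Proof.
move=> r0 hi hj ro.
have hM : mshift (mate o) = ind o + mshift o.
  by rewrite -(mshift_ind ro) subrK.
set E := (ind o == _ %[mod _])%Z.
have EE : E = (r%:Z %| (i%:Z - 1) - ind o - (j%:Z - 1))%Z.
  rewrite /E eqz_mod_dvd -rpredN.
  by have -> : - (ind o - (i%:Z - j%:Z)) = i%:Z - 1 - ind o - (j%:Z - 1) by ring.
rewrite (eq_bigr (fun p : nat => if (r%:Z %| p%:Z - (mshift o + i%:Z))%Z && E then c else 0)); last first.
  move=> p _; rewrite !mcompE // hM EE.
  have -> : p%:Z - 1 - mshift o - (i%:Z - 1) = p%:Z - (mshift o + i%:Z) by ring.
  have -> : p%:Z - 1 - (ind o + mshift o) - (j%:Z - 1) =
     (p%:Z - (mshift o + i%:Z)) + (i%:Z - 1 - ind o - (j%:Z - 1)) by ring.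
  by case: (boolP (_ %| p%:Z - _)%Z) => h //=; rewrite rpredDl.
clearbody E; clear EE; case: E.
  by rewrite (eq_bigr (fun p : nat => if (r%:Z %| p%:Z - (mshift o + i%:Z))%Z then c else 0))
     ?count_dvd // => p _; rewrite andbT.
by rewrite big1 // => p _; rewrite andbF.
Qed.

Lemma ind_bound D (o : 'I_(npass D)) : `|ind o| <= (npass D)%:Z.
Proof.
rewrite /ind; apply: Order.POrderTheory.le_trans (ler_norm_sum _ _ _) _.
rewrite big_mkcond /=.
apply: (@Order.POrderTheory.le_trans _ _ (\sum_(k : 'I_(npass D)) (1 : int))).
  by apply: ler_sum => k _; case: (_ && _) => //; case: (lr k).
by rewrite sumr_const card_ord; lia.
Qed.

Lemma seq_sum (s : seq int) (P : pred int) (x c : int) : uniq s -> x \in s ->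
  \sum_(n <- s | P n) (if x == n then c else 0) = if P x then c else 0.
Proof.
move=> us xs; rewrite (big_rem x) // eqxx big1_seq ?Monoid.simpm //.
move=> n /andP [_ hn]; rewrite (mem_rem_uniq x us) inE in hn.
by case/andP: hn => nx _; rewrite eq_sym (negbTE nx).
Qed.

Unset Implicit Arguments.

Theorem theorem1p2 (D : vkdiagram) (r i j : nat) :
  (2 <= r)%N -> (1 <= i <= r)%N -> (1 <= j <= r)%N -> i != j ->
  Lk (multiplex_crossings D r) i j =
  (\sum_(n <- [seq (k%:Z - (npass D)%:Z)%R | k <- iota 0 (2 * npass D).+1]
          | (n == (i%:Z - j%:Z)%R %[mod r%:Z])%Z) J D n)%R.
Proof.
move=> r2 hi hj _.
have us : uniq [seq (k%:Z - (npass D)%:Z)%R | k <- iota 0 (2 * npass D).+1].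
  rewrite map_inj_uniq ?iota_uniq //.
  by move=> a b /= /eqP; rewrite subr_eq subrK => /eqP [].
have ms (o : 'I_(npass D)) : ind o \in [seq (k%:Z - (npass D)%:Z)%R | k <- iota 0 (2 * npass D).+1].
  have hb := ind_bound o.
  apply/mapP; exists (absz (ind o + (npass D)%:Z)).
    rewrite mem_iota add0n ltnS; lia.
  lia.
have r0 : (0 < r)%N by apply: leq_trans r2.
rewrite /Lk /multiplex_crossings big_mkcond big_allpairs_dep /= big_filter.
rewrite (eq_bigr (fun o => if (ind o == (i%:Z - j%:Z) %[mod r%:Z])%Z then csign o else 0));
  last by move=> o /andP [ro _]; rewrite inner.
rewrite /J.
under [RHS]eq_bigr do rewrite big_mkcondr.
rewrite exchange_big.
rewrite big_enum_cond; apply: eq_big => [o|o ro]; first by rewrite inE.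
by rewrite seq_sum; [| apply: us | apply: ms].
Qed.
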